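(* Let $U=[N]$, let $\ell$ be a positive integer dividing $N$, let $\mathcal{S}=\{S_1,\dots,S_m\}$ be a collection of subsets of $U$ each of size $N/\ell$, and let $\varepsilon>0$. Let $I_{\mathrm{rp}}$ be the $k$-RP instance with $k=\ell$, point set $\mathcal{X}=U\cup\mathcal{S}$ (an element point for each $u\in U$ and a set point for each $S\in\mathcal{S}$), distance $d(u,S)=1$ if $u\in S$ and $d(u,S)=2-\varepsilon$ if $u\notin S$ for $u\in U$, $S\in\mathcal{S}$; $d(u_1,u_2)=2$ for distinct $u_1,u_2\in U$; $d(S_1,S_2)=1$ for distinct set points; and $P$ uniform over the element points $U$. If there exist $\ell$ sets in $\mathcal{S}$ whose union is $U$ (a full covering instance), then there exists a $k$-RP solution for $I_{\mathrm{rp}}$ of cost at most $k\cdot(1+1/e)$.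
   Context: For a finite metric space $(\mathcal{X},d)$, $\mathcal{X}_k$ is the set of multisets of exactly $k$ points of $\mathcal{X}$; for $A,B\in\mathcal{X}_k$, $d_k(A,B)$ is the minimum, over perfect matchings between the elements of $A$ and of $B$ (with multiplicity), of the sum of the distances of matched pairs; $P_k$ is the distribution of $k$ points drawn i.i.d. from $P$. A $k$-RP solution is any $K\in\mathcal{X}_k$, and its cost is $\mathbb{E}_{L\sim P_k}[d_k(K,L)]$. *)

(* Defs.v *)
From mathcomp Require Import all_boot all_order all_algebra all_fingroup.
From mathcomp Require Import reals sequences.
Set Implicit Arguments. Unset Strict Implicit. Unset Printing Implicit Defensive.
Import Order.TTheory GRing.Theory Num.Theory.
Local Open Scope ring_scope.

(* A multiset of exactly k points of X is represented by a k-indexed family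
   (an ordered k-tuple); multisets are its permutation classes, and all the
   notions below are permutation invariant. *)

(* d_k(A,B): minimum over perfect matchings (= permutations s of 'I_k) of the
   sum of matched distances. The fold starts at the identity matching, which
   is itself one of the candidates, so this is exactly the minimum. *)
Definition dk (R : realDomainType) (X : Type) (d : X -> X -> R) (k : nat)
    (A B : 'I_k -> X) : R :=
  \big[Num.min/(\sum_(i < k) d (A i) (B i))]_(s : 'S_k)
     \sum_(i < k) d (A i) (B (s i)).

(* cost of a k-RP solution K for distribution P on a finite X:
   E_{L ~ P_k} [ d_k(K, L) ], with P_k the law of k i.i.d. draws from P. *)
Definition rp_cost (R : realDomainType) (X : finType) (d : X -> X -> R)
    (P : X -> R) (k : nat) (K : 'I_k -> X) : R :=
  \sum_(L : {ffun 'I_k -> X}) (\prod_(i < k) P (L i)) * dk d K L.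

(* The point set U ∪ S: element points inl u (u ∈ [N] = 'I_N), set points
   inr i (for the set S i, i < m). *)
Definition rp_dist (R : realDomainType) (N m : nat) (S : 'I_m -> {set 'I_N})
    (eps : R) (x y : 'I_N + 'I_m) : R :=
  match x, y with
  | inl u1, inl u2 => if u1 == u2 then 0 else 2
  | inr i, inr j => if i == j then 0 else 1
  | inl u, inr i => if u \in S i then 1 else 2 - eps
  | inr i, inl u => if u \in S i then 1 else 2 - eps
  end.

Definition rp_P (R : realDomainType) (N m : nat) (x : 'I_N + 'I_m) : R :=
  match x with
  | inl _ => (N%:R)^-1
  | inr _ => 0
  end.

(* Main.v *)
Require Import Defs.
From mathcomp Require Import all_boot all_order all_algebra all_fingroup.
From mathcomp Require Import reals sequences exp.
From mathcomp Require Import ring.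
Import Order.TTheory GRing.Theory Num.Theory.
Local Open Scope ring_scope.

Lemma perm_section (T : finType) (f : T -> T) (A : {set T}) :
  {subset A <= codom f} -> exists s : {perm T}, forall i, i \in A -> f (s i) = i.
Proof.
have [n] := ubnP #|A|; elim: n A => // n IH A; rewrite ltnS => leA sub.
case: (set_0Vmem A) => [->|[a aA]]; first by exists 1%g => i; rewrite inE.
have [||s' Hs'] := IH (A :\ a).
  by apply: leq_trans leA; rewrite (cardsD1 a A) aA.
  by move=> x /setD1P [_ /sub].
have /codomP [j fj] := sub a aA.
exists (tperm a ((s'^-1)%g j) * s')%g => i iA.
rewrite permM.
have [->|ia] := eqVneq i a; first by rewrite tpermL permKV fj.
have it : i != (s'^-1)%g j.
  apply/eqP=> E; move: (ia) => /eqP; apply.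
  have h : f (s' i) = i by apply: Hs'; rewrite in_setD1 ia iA.
  by rewrite -h E permKV fj.
by rewrite tpermD 1?eq_sym // Hs' // in_setD1 ia.
Qed.

Theorem lemma3 (R : realType) (N l m : nat) (S : 'I_m -> {set 'I_N}) (eps : R) :
  (0 < l)%N -> (l %| N)%N ->
  (forall i : 'I_m, #|S i| = (N %/ l)%N) ->
  0 < eps ->
  (exists I : {set 'I_m}, #|I| = l /\ \bigcup_(i in I) S i = [set: 'I_N]) ->
  exists K : 'I_l -> ('I_N + 'I_m)%type,
    rp_cost (rp_dist S eps) (@rp_P R N m) K <= l%:R * (1 + (expR 1)^-1).
Proof.
move=> l0 ldvd Hcard eps0 [I [HI Hcov]]; subst l.
set n := #|I| in l0 ldvd Hcard *.
pose X := ('I_N + 'I_m)%type.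
pose d := rp_dist S eps.
pose P := @rp_P R N m.
pose K (i : 'I_n) : X := inr (enum_val i).
have cP : forall u : 'I_N, exists i : 'I_n, u \in S (enum_val i).
  move=> u; have : u \in \bigcup_(k in I) S k by rewrite Hcov inE.
  by case/bigcupP => k kI uk; exists (enum_rank_in kI k); rewrite enum_rankK_in.
pose c u := xchoose (cP u).
have cS u : u \in S (enum_val (c u)) := xchooseP (cP u).
pose g (j : 'I_n) (x : X) : 'I_n := match x with inl u => c u | inr _ => j end.
pose B (L : 'I_n -> X) : R := \sum_(i : 'I_n) (1 + \prod_(j : 'I_n) ((g j (L j) != i)%:R)).
have d2 i x : d (K i) x <= 2.
  case: x => [u|k] /=; first by case: ifP => _; rewrite ?ler1n // gerBl ltW.
  by case: ifP => _; rewrite ?ler0n ?ler1n.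
have C1 L : dk d K L <= B L.
  pose f j := g j (L j).
  have [s Hs] : exists s : {perm 'I_n}, forall i, i \in [set i | i \in codom f] -> f (s i) = i.
    by apply: perm_section => i; rewrite inE.
  rewrite /dk (bigD1 s) //= ge_min; apply/orP; left.
  apply: ler_sum => i _.
  case: (boolP (i \in codom f)) => [ci|nci].
    have := Hs i; rewrite inE => /(_ ci); rewrite /f /g => cu.
    have pge0 : 0 <= \prod_(j : 'I_n) ((g j (L j) != i)%:R : R).
      by apply: prodr_ge0 => j _; rewrite ler0n.
    apply: (@le_trans _ _ 1); last by rewrite lerDl; exact: pge0.
    move: cu; case: (L (s i)) => [u|k] /= cu.
      by rewrite -cu cS.
    by case: ifP => _; rewrite ?ler01.
  rewrite big1 => [|j _]; last first.
    suff -> : g j (L j) != i by [].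
    by apply: contra nci => /eqP <-; exact: codom_f.
  by apply: le_trans (d2 i _) _; rewrite -[2]/(1 + 1 : R) lexx.
have wge0 (L : 'I_n -> X) : 0 <= \prod_(i : 'I_n) P (L i).
  by apply: prodr_ge0 => i _; case: (L i) => [u|k] /=; rewrite ?invr_ge0 ?ler0n ?lexx.
exists K.
apply: (@le_trans _ _ (\sum_(L : {ffun 'I_n -> X}) (\prod_(i : 'I_n) P (L i)) * B L)).
  rewrite /rp_cost; apply: ler_sum => L _; apply: ler_wpM2l; [exact: wge0 | exact: C1].
pose a (i : 'I_n) := (\sum_(u : 'I_N) (c u == i))%N.
have E : \sum_(L : {ffun 'I_n -> X}) (\prod_(i : 'I_n) P (L i)) * B L =
   n%:R * (\sum_(L : {ffun 'I_n -> X}) \prod_(i : 'I_n) P (L i)) +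
   \sum_(i : 'I_n) \sum_(L : {ffun 'I_n -> X}) \prod_(j : 'I_n) (P (L j) * (g j (L j) != i)%:R).
  transitivity (\sum_(L : {ffun 'I_n -> X}) (n%:R * \prod_(i : 'I_n) P (L i) +
     \sum_(i : 'I_n) \prod_(j : 'I_n) (P (L j) * (g j (L j) != i)%:R))).
    apply: eq_bigr => L _; rewrite /B big_split /= sumr_const card_ord mulrDr mulr_sumr.
    congr (_ + _); first by rewrite mulr_natr mulr_natl.
    by apply: eq_bigr => i _; rewrite big_split.
  by rewrite big_split /= -mulr_sumr; congr (_ + _); exact: exchange_big.
have F1 : \sum_(L : {ffun 'I_n -> X}) \prod_(i : 'I_n) P (L i) = (N%:R^-1 *+ N) ^+ n.
  rewrite -(bigA_distr_bigA (fun (_ : 'I_n) (x : X) => P x)) prodr_const card_ord.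
  congr (_ ^+ _); rewrite big_sumType /= sumr_const card_ord.
  by rewrite big1 ?addr0 // => k _.
have F2 i : \sum_(L : {ffun 'I_n -> X}) \prod_(j : 'I_n) (P (L j) * (g j (L j) != i)%:R)
    = (N%:R^-1 * (N%:R - (a i)%:R)) ^+ n.
  rewrite -(bigA_distr_bigA (fun (j : 'I_n) (x : X) => P x * (g j x != i)%:R)).
  transitivity (\prod_(j : 'I_n) (N%:R^-1 * (N%:R - (a i)%:R) : R)); last by rewrite prodr_const card_ord.
  apply: eq_bigr => j _.
  rewrite big_sumType /= [X in _ + X]big1 ?addr0 => [|k _]; last by rewrite mul0r.
  rewrite -mulr_sumr; congr (_ * _).
  transitivity (\sum_(u : 'I_N) (1 - (c u == i)%:R : R)).
    by apply: eq_bigr => u _ /=; case: (c u == i); rewrite ?subrr ?subr0.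
  by rewrite sumrB sumr_const card_ord /a natr_sum.
have le_a i : (a i <= N %/ n)%N.
  rewrite -(Hcard (enum_val i)) -sum1_card big_mkcond /=.
  apply: leq_sum => u _; case: eqP => [<-|//]; by rewrite cS.
have sa : (\sum_(i : 'I_n) a i = N)%N.
  rewrite /a exchange_big /=.
  transitivity (\sum_(u : 'I_N) 1)%N; last by rewrite sum1_card card_ord.
  apply: eq_bigr => u _; rewrite (bigD1 (c u)) //= eqxx big1 // => k.
  by rewrite eq_sym => /negbTE ->.
have ha i : a i = (N %/ n)%N.
  apply/eqP; rewrite eqn_leq le_a /= leqNgt; apply/negP => lt.
  have : (\sum_(k : 'I_n) a k < \sum_(k : 'I_n) (N %/ n))%N.
    rewrite (bigD1 i) //= [X in (_ < X)%N](bigD1 i) //= -addSn leq_add //.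
    by apply: leq_sum => k _; exact: le_a.
  by rewrite sa sum_nat_const card_ord mulnC divnK // ltnn.
have n1 : 0 <= 1 - n%:R^-1 :> R by rewrite subr_ge0 invf_le1 ?ltr0n // ler1n.
have qb i : 0 <= N%:R^-1 * (N%:R - (a i)%:R) :> R /\ N%:R^-1 * (N%:R - (a i)%:R) <= 1 - n%:R^-1 :> R.
  rewrite ha; case: (posnP N) => [->|Npos]; first by rewrite invr0 mul0r lexx.
  have Qpos : (0 < N %/ n)%N by rewrite divn_gt0 // dvdn_leq.
  have Q0 : (N %/ n)%:R != 0 :> R by rewrite pnatr_eq0 -lt0n.
  have n0 : n%:R != 0 :> R by rewrite pnatr_eq0 -lt0n.
  suff -> : N%:R^-1 * (N%:R - (N %/ n)%:R) = 1 - n%:R^-1 :> R by rewrite lexx n1.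
  rewrite -{1 2}(divnK ldvd) natrM; field.
  by rewrite Q0 n0.
rewrite E mulrDr; apply: lerD.
  rewrite F1; apply: ler_wpM2l; first exact: ler0n.
  apply: exprn_ile1; first by rewrite mulrn_wge0 // invr_ge0 ler0n.
  case: (posnP N) => [->|Npos]; first by rewrite mulr0n ler01.
  by rewrite -(mulr_natr (N%:R^-1)) mulVf // pnatr_eq0 -lt0n.
apply: (@le_trans _ _ (\sum_(i : 'I_n) (expR 1)^-1)); last first.
  by rewrite sumr_const card_ord mulr_natl.
apply: ler_sum => i _; rewrite F2; have [q0 q1] := qb i.
apply: (@le_trans _ _ ((1 - n%:R^-1) ^+ n)).
  by apply: lerXn2r; rewrite ?nnegrE.
apply: (@le_trans _ _ ((expR (- n%:R^-1)) ^+ n)).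
  by apply: lerXn2r; rewrite ?nnegrE ?expR_ge0 // expR_ge1Dx.
rewrite -expRM_natl mulrN mulfV ?expRN // pnatr_eq0 -lt0n //.
Qed.
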